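(* Let $g_0(x) = 3x^2-1$, $g_1(x) = 3x^2-3x+1$, $g_2(x) = 3x^2+3x+1 \in \mathbb{Z}[x]$ and $\Phi_3(x) = x^2+x+1$. Let $q$ be a prime with $q\equiv 1 \pmod 6$, and let $s$ be an integer with $g_1(s)\equiv 0 \pmod q$ or $g_2(s) \equiv 0 \pmod q$. Define \begin{align*} f_9(x) &= 3qx^2+(6s-3)x+g_1(s)/q, & f_{10}(x) &= 3q^2x^2+(6s+3)qx+g_2(s),\\ f_{11}(x) &= 3q^2x^2+(6s-3)qx+g_1(s), & f_{12}(x) &= 3qx^2+(6s+3)x+g_2(s)/q. \end{align*} Then for all $x\in\mathbb{Z}$, \[ \Phi_3(g_0(qx+s)) = \begin{cases} q\,f_9(x)f_{10}(x), & \text{if } q \mid g_1(s),\\ q\,f_{11}(x)f_{12}(x), & \text{if } q \mid g_2(s),\end{cases} \] and (in each case in which they have integer coefficients) the polynomials $f_9, f_{10}, f_{11}, f_{12}$ are irreducible over $\mathbb{Z}$.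
   Context: A polynomial in $\mathbb{Z}[x]$ is called irreducible over $\mathbb{Z}$ if it is not a product of two non-constant polynomials with integer coefficients. *)

(* Defs.v *)
From HB Require Import structures.
From mathcomp Require Import all_boot all_order all_algebra.
Set Implicit Arguments. Unset Strict Implicit. Unset Printing Implicit Defensive.
Import Order.TTheory GRing.Theory Num.Theory.
Local Open Scope ring_scope.

Definition g0 : {poly int} := 3%:P * 'X^2 - 1.
Definition g1 : {poly int} := 3%:P * 'X^2 - 3%:P * 'X + 1.
Definition g2 : {poly int} := 3%:P * 'X^2 + 3%:P * 'X + 1.
Definition Phi3 : {poly int} := 'X^2 + 'X + 1.

(* f9 and f12 involve the exact quotients g1(s)/q and g2(s)/q; they are only
   used under the hypothesis that q divides g1(s) (resp. g2(s)). *)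
Definition f9 (q : nat) (s : int) : {poly int} :=
  (3 * q%:Z)%:P * 'X^2 + (6 * s - 3)%:P * 'X + (g1.[s] %/ q%:Z)%Z%:P.
Definition f10 (q : nat) (s : int) : {poly int} :=
  (3 * q%:Z ^+ 2)%:P * 'X^2 + ((6 * s + 3) * q%:Z)%:P * 'X + (g2.[s])%:P.
Definition f11 (q : nat) (s : int) : {poly int} :=
  (3 * q%:Z ^+ 2)%:P * 'X^2 + ((6 * s - 3) * q%:Z)%:P * 'X + (g1.[s])%:P.
Definition f12 (q : nat) (s : int) : {poly int} :=
  (3 * q%:Z)%:P * 'X^2 + (6 * s + 3)%:P * 'X + (g2.[s] %/ q%:Z)%Z%:P.

Definition irreducible_Z (p : {poly int}) : Prop :=
  ~ exists a b : {poly int}, (1 < size a)%N /\ (1 < size b)%N /\ p = a * b.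

(* Main.v *)
Require Import Defs.
From HB Require Import structures.
From mathcomp Require Import all_boot all_order all_algebra.
From mathcomp Require Import ring lra zify.
Import Order.TTheory GRing.Theory Num.Theory.
Local Open Scope ring_scope.

Lemma coefQ (A B C : int) j :
  (A%:P * 'X^2 + B%:P * 'X + C%:P)`_j =
  (if j == 2%N then A else 0) + (if j == 1%N then B else 0) + (if j == 0%N then C else 0).
Proof.
rewrite !coefD !coefCM coefXn coefX coefC.
by case: j => [|[|[|j]]] /=; rewrite ?mulr0 ?mulr1.
Qed.

Lemma irr2 (A B C : int) : B ^+ 2 - 4 * A * C < 0 ->
  irreducible_Z (A%:P * 'X^2 + B%:P * 'X + C%:P).
Proof.
move=> hd [a [b [ha [hb e]]]].
have a0 : a != 0 by by rewrite -size_poly_gt0 (ltn_trans _ ha).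
have b0 : b != 0 by by rewrite -size_poly_gt0 (ltn_trans _ hb).
have hs : (size (a * b)%R <= 3)%N.
  rewrite -e; apply/leq_sizeP => j hj; rewrite coefQ.
  by case: j hj => [|[|[|j]]].
rewrite size_mul // in hs.
have h4 : (size a + size b <= 4)%N by move: hs; case: (size a + size b)%N.
have sa : (size a <= 2)%N by lia.
have sb : (size b <= 2)%N by lia.
move/leq_sizeP: sa => sa; move/leq_sizeP: sb => sb.
have e0 := congr1 (fun p : {poly int} => p`_0) e.
have e1 := congr1 (fun p : {poly int} => p`_1) e.
have e2 := congr1 (fun p : {poly int} => p`_2) e.
move: e0 e1 e2; rewrite /= !coefQ /= !coefM !big_ord_recr !big_ord0 /=.
rewrite !subnn !subn0 /= (sa 2%N) // (sb 2%N) // mulr0 ?add0r ?addr0 ?mul0r ?add0r ?addr0 /=.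
move=> eC eB eA; move: hd; rewrite eA eB eC.
set x := a`_0; set y := a`_1; set z := b`_0; set w := b`_1.
have -> : (x * w + y * z) ^+ 2 - 4 * (y * w) * (x * z) = (x * w - y * z) ^+ 2 by ring.
by rewrite ltNge sqr_ge0.
Qed.

Theorem lemma3 (q : nat) (s : int) :
  prime q -> (q %% 6 = 1)%N ->
  (q%:Z %| g1.[s])%Z \/ (q%:Z %| g2.[s])%Z ->
  (forall x : int,
     ((q%:Z %| g1.[s])%Z ->
        Phi3.[g0.[q%:Z * x + s]] = q%:Z * (f9 q s).[x] * (f10 q s).[x]) /\
     ((q%:Z %| g2.[s])%Z ->
        Phi3.[g0.[q%:Z * x + s]] = q%:Z * (f11 q s).[x] * (f12 q s).[x])) /\
  ((q%:Z %| g1.[s])%Z -> irreducible_Z (f9 q s)) /\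
  irreducible_Z (f10 q s) /\
  irreducible_Z (f11 q s) /\
  ((q%:Z %| g2.[s])%Z -> irreducible_Z (f12 q s)).
Proof.
move=> pq _ _.
have qp : 0 < q%:Z by rewrite ltz_nat prime_gt0.
have G0 y : g0.[y] = 3 * y ^+ 2 - 1 by rewrite /g0 !hornerE.
have G1 y : g1.[y] = 3 * y ^+ 2 - 3 * y + 1 by rewrite /g1 !hornerE.
have G2 y : g2.[y] = 3 * y ^+ 2 + 3 * y + 1 by rewrite /g2 !hornerE.
have P3 y : Phi3.[y] = y ^+ 2 + y + 1 by rewrite /Phi3 !hornerE.
have E y : Phi3.[g0.[y]] = g1.[y] * g2.[y] by rewrite P3 G0 G1 G2; ring.
have H1 x : g1.[q%:Z * x + s] = 3 * q%:Z ^+ 2 * x ^+ 2 + (6 * s - 3) * q%:Z * x + g1.[s].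
  by rewrite !G1; ring.
have H2 x : g2.[q%:Z * x + s] = 3 * q%:Z ^+ 2 * x ^+ 2 + (6 * s + 3) * q%:Z * x + g2.[s].
  by rewrite !G2; ring.
have nq : - (3 * q%:Z ^+ 2) < 0.
  by rewrite oppr_lt0 pmulr_rgt0 // exprn_gt0.
split; [move=> x; split => hd|split; [|split; [|split]]].
- have hc := divzK hd.
  rewrite E H1 H2 /f9 /f10.
  move: hc; set c := (g1.[s] %/ q%:Z)%Z => hc; clearbody c.
  move: (g1.[s]) (g2.[s]) hc => G1s G2s hc; rewrite !(hornerD, hornerCM, hornerC, hornerX, hornerXn).
  rewrite -hc; ring.
- have hc := divzK hd.
  rewrite E H1 H2 /f11 /f12.
  move: hc; set c := (g2.[s] %/ q%:Z)%Z => hc; clearbody c.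
  move: (g1.[s]) (g2.[s]) hc => G1s G2s hc; rewrite !(hornerD, hornerCM, hornerC, hornerX, hornerXn).
  rewrite -hc; ring.
- move=> hd; have hc := divzK hd.
  apply: irr2.
  move: hc; set c := (g1.[s] %/ q%:Z)%Z => hc; clearbody c.
  move: hc; rewrite G1 => hc.
  have -> : (6 * s - 3) ^+ 2 - 4 * (3 * q%:Z) * c = (6 * s - 3) ^+ 2 - 12 * (c * q%:Z) by ring.
  rewrite hc.
  have -> : (6 * s - 3) ^+ 2 - 12 * (3 * s ^+ 2 - 3 * s + 1) = -3 by ring.
  by rewrite oppr_lt0.
- apply: irr2; rewrite G2.
  have -> : ((6 * s + 3) * q%:Z) ^+ 2 - 4 * (3 * q%:Z ^+ 2) * (3 * s ^+ 2 + 3 * s + 1) = - (3 * q%:Z ^+ 2) by ring.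
  exact: nq.
- apply: irr2; rewrite G1.
  have -> : ((6 * s - 3) * q%:Z) ^+ 2 - 4 * (3 * q%:Z ^+ 2) * (3 * s ^+ 2 - 3 * s + 1) = - (3 * q%:Z ^+ 2) by ring.
  exact: nq.
- move=> hd; have hc := divzK hd.
  apply: irr2.
  move: hc; set c := (g2.[s] %/ q%:Z)%Z => hc; clearbody c.
  move: hc; rewrite G2 => hc.
  have -> : (6 * s + 3) ^+ 2 - 4 * (3 * q%:Z) * c = (6 * s + 3) ^+ 2 - 12 * (c * q%:Z) by ring.
  rewrite hc.
  have -> : (6 * s + 3) ^+ 2 - 12 * (3 * s ^+ 2 + 3 * s + 1) = -3 by ring.
  by rewrite oppr_lt0.
Qed.
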